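(* For every $n\in\mathbb{N}$ and every $l\in\{0,\ldots,n\}$ the polynomials $A_n^l$ defined in the context factorize as $$A_{n}^{l}=\frac{n!\,l!}{2^{2(n-l)}(n+l+1)!\,(2l)!}\left[\sum_{h=0}^{n-l}\frac{(2n-2h+1)!\,(2l+2h)!}{h!\,(n-l-h)!\,(n-h)!\,(l+h)!}\,\overline{\mathbf{x}}^{\,h}\mathbf{x}^{\,n-l-h}\right]A_{l}^{l},$$ with $A_{l}^{l}=(x_{1}-x_{2}\mathbf{e}_{3})^{l}$.
   Context: $\mathbb{H}$: real quaternions with basis $\mathbf{e}_0=1,\mathbf{e}_1,\mathbf{e}_2,\mathbf{e}_3$, $\mathbf{e}_i\mathbf{e}_j+\mathbf{e}_j\mathbf{e}_i=-2\delta_{ij}$ ($i,j=1,2,3$), $\mathbf{e}_1\mathbf{e}_2=\mathbf{e}_3$. A point $(x_0,x_1,x_2)\in\mathbb{R}^3$ is identified with $\mathbf{x}=x_0+x_1\mathbf{e}_1+x_2\mathbf{e}_2$, and $\overline{\mathbf{x}}=x_0-x_1\mathbf{e}_1-x_2\mathbf{e}_2$ (note $\mathbf{x}$ and $\overline{\mathbf{x}}$ commute). Spherical coordinates: $x_0=r\cos\theta$, $x_1=r\sin\theta\cos\varphi$, $x_2=r\sin\theta\sin\varphi$. Let $P_k$ be the Legendre polynomials and $P_k^m(t)=(1-t^2)^{m/2}\frac{d^m}{dt^m}P_k(t)$ (no Condon–Shortley phase; $P_k^m=0$ for $m>k$). For $n\in\mathbb{N}_0$, $0\le m\le n+1$ put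 $$\mathcal{A}^{m,n}(\theta)=\tfrac12\Big(\sin^2\theta\,\tfrac{d}{dt}[P_{n+1}^m(t)]_{t=\cos\theta}+(n+1)\cos\theta\,P_{n+1}^m(\cos\theta)\Big).$$ For $n\in\mathbb{N}_0$, $l=0,\ldots,n$ define $$A_n^l(\mathbf{x})=\frac{2^{l+1}n!\,r^n}{(n+l+2)!}\Big[(n+l+2)\mathcal{A}^{l,n}(\theta)\big(\cos l\varphi-\sin l\varphi\,\mathbf{e}_3\big)+\mathcal{A}^{l+1,n}(\theta)\big(\cos((l+1)\varphi)\,\mathbf{e}_1+\sin((l+1)\varphi)\,\mathbf{e}_2\big)\Big],$$ a homogeneous polynomial of degree $n$ in $x_0,x_1,x_2$. *)

(* Defs.v *)
From HB Require Import structures.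
From mathcomp Require Import all_boot all_order all_algebra.
From mathcomp Require Import all_classical all_reals all_analysis.
Set Implicit Arguments. Unset Strict Implicit. Unset Printing Implicit Defensive.
Import Order.TTheory GRing.Theory Num.Theory.
Local Open Scope ring_scope.

Section Defs.
Variable R : realType.

(* Real quaternions a + b e1 + c e2 + d e3, with e_i^2 = -1, e1 e2 = e3,
   e2 e3 = e1, e3 e1 = e2 (consequence of anticommutation and e1 e2 = e3). *)
Record quat := Quat { q0 : R; q1 : R; q2 : R; q3 : R }.

Definition qadd (p q : quat) : quat :=
  Quat (q0 p + q0 q) (q1 p + q1 q) (q2 p + q2 q) (q3 p + q3 q).
Definition qscale (a : R) (q : quat) : quat :=
  Quat (a * q0 q) (a * q1 q) (a * q2 q) (a * q3 q).
Definition qmul (p q : quat) : quat :=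
  Quat (q0 p * q0 q - q1 p * q1 q - q2 p * q2 q - q3 p * q3 q)
       (q0 p * q1 q + q1 p * q0 q + q2 p * q3 q - q3 p * q2 q)
       (q0 p * q2 q - q1 p * q3 q + q2 p * q0 q + q3 p * q1 q)
       (q0 p * q3 q + q1 p * q2 q - q2 p * q1 q + q3 p * q0 q).
Definition qzero : quat := Quat 0 0 0 0.
Definition qone : quat := Quat 1 0 0 0.
Definition qpow (q : quat) (k : nat) : quat := iter k (qmul q) qone.
Fixpoint qsum (F : nat -> quat) (N : nat) : quat :=
  match N with 0 => qzero | N'.+1 => qadd (qsum F N') (F N') end.

Definition xq (x0 x1 x2 : R) : quat := Quat x0 x1 x2 0.
Definition xbarq (x0 x1 x2 : R) : quat := Quat x0 (- x1) (- x2) 0.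

Definition Legendre (k : nat) : {poly R} :=
  (2 ^+ k * (k`!)%:R)^-1 *: (('X ^+ 2 - 1) ^+ k)^`(k).

(* associated Legendre function without Condon-Shortley phase:
   P_k^m(t) = (1 - t^2)^(m/2) d^m/dt^m P_k(t)  (for |t| <= 1) *)
Definition assocLegendre (k m : nat) (t : R) : R :=
  Num.sqrt (1 - t ^+ 2) ^+ m * ((Legendre k)^`(m)).[t].

Definition calA (m n : nat) (theta : R) : R :=
  2^-1 * (sin theta ^+ 2 * (derive1 (assocLegendre n.+1 m)) (cos theta)
          + (n.+1)%:R * cos theta * assocLegendre n.+1 m (cos theta)).

Definition A_nl (n l : nat) (r theta phi : R) : quat :=
  qscale (2 ^+ l.+1 * (n`!)%:R * r ^+ n / ((n + l + 2)`!)%:R)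
    (qadd
      (qscale ((n + l + 2)%:R * calA l n theta)
              (Quat (cos (l%:R * phi)) 0 0 (- sin (l%:R * phi))))
      (qscale (calA l.+1 n theta)
              (Quat 0 (cos (l.+1%:R * phi)) (sin (l.+1%:R * phi)) 0))).

End Defs.

(* Main.v *)
Require Import Defs.
From mathcomp Require Import all_boot all_order all_algebra.
From mathcomp Require Import all_classical all_reals all_analysis.
From mathcomp Require Import complex.
From mathcomp Require Import ring lra zify.
Import Order.TTheory GRing.Theory Num.Theory.
Local Open Scope ring_scope.
Lemma eq_by0 (R : comNzRingType) (x y z : R) : z = 0 -> x - y = z -> x = y.
Proof. by move=> -> /eqP; rewrite subr_eq0 => /eqP. Qed.
Arguments eq_by0 {R x y z}.

Lemma fact_neq0 (R : realType) n : (n`!)%:R != 0 :> R.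
Proof. by rewrite pnatr_eq0 -lt0n fact_gt0. Qed.
Lemma natS_neq0 (R : realType) n : (n.+1)%:R != 0 :> R.
Proof. by rewrite pnatr_eq0. Qed.
Lemma natS_neq0' (R : realType) n : 1 + n%:R != 0 :> R.
Proof. by rewrite addrC natr1 pnatr_eq0. Qed.
Lemma two_neq0 (R : realType) n : 2 ^+ n != 0 :> R.
Proof. by rewrite expf_neq0 // pnatr_eq0. Qed.
Ltac nz := repeat (apply/andP; split); rewrite ?fact_neq0 ?natS_neq0 ?natS_neq0' ?two_neq0 //.


Section Leg.
Variable R : realType.
Implicit Types (f : {poly R}).

Lemma leib1 f k : ('X * f)^`(k.+1) = 'X * f^`(k.+1) + f^`(k) * (k.+1)%:R.
Proof.
have := derivnMXaddC k f 0; rewrite polyC0 addr0 mulrC => ->.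
by rewrite mulr_natr [_ * 'X]mulrC addrC.
Qed.

Lemma leib2 f k : (('X^2 - 1) * f)^`(k.+2) =
  ('X^2 - 1) * f^`(k.+2) + 'X * f^`(k.+1) * (2 * (k.+2))%:R + f^`(k) * ((k.+2) * (k.+1))%:R.
Proof.
have -> : ('X^2 - 1) * f = 'X * ('X * f) - f by rewrite mulrBl mulrA -expr2 mul1r.
rewrite derivnB leib1 leib1 derivnS leib1 -derivnS.
rewrite !natrM; ring.
Qed.

Definition Rod k : {poly R} := ('X^2 - 1) ^+ k.
Definition cL k : R := (2 ^+ k * (k`!)%:R)^-1.
Lemma LegE k : Legendre R k = cL k *: (Rod k)^`(k).
Proof. by []. Qed.

Lemma Rod_der k : (Rod k.+1)^`() = 'X * Rod k * (2 * k.+1)%:R.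
Proof.
rewrite /Rod deriv_exp /= derivB derivXn derivC subr0 -mulr_natr natrM.
rewrite /= expr1; ring.
Qed.

Lemma RodS k : Rod k.+1 = ('X^2 - 1) * Rod k.
Proof. by rewrite /Rod exprS. Qed.


Lemma derivn_add f a b : (f^`(a))^`(b) = f^`(b + a).
Proof. by rewrite /derivn iterD. Qed.

Lemma derivnSr f n : (f^`())^`(n) = f^`(n.+1).
Proof. by rewrite -derivn1 derivn_add addn1. Qed.

Lemma derivnMr f (c : R) n : (f * c%:P)^`(n) = f^`(n) * c%:P.
Proof.
elim: n => [|n IH]; first by rewrite !derivn0.
by rewrite !derivnS IH derivM derivC mulr0 addr0.
Qed.

Lemma derivnMnr f (c : nat) n : (f * c%:R)^`(n) = f^`(n) * c%:R.
Proof. by rewrite -polyC_natr derivnMr. Qed.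

Lemma ode0 k : (1 - 'X^2) * (Legendre R k)^`(2) - 'X * (Legendre R k)^`(1) * 2%:R
   + Legendre R k * (k%:R * (k%:R + 1)) = 0.
Proof.
case: k => [|j].
  rewrite LegE /Rod expr0 derivn0 !derivnZ derivn1 derivnS derivn1 !derivC.
  by rewrite !(scaler0, mulr0, mul0r, subrr, addr0).
set k := j.+1.
have H : (('X^2-1) * (Rod k)^`())^`(j.+2) = (('X * Rod k) * (2*k)%:R)^`(j.+2).
  by rewrite Rod_der RodS /k; congr derivn; ring.
rewrite leib2 derivnMnr leib1 !derivnSr in H.
set U0 := (Rod k)^`(j.+1) in H.
set U1 := (Rod k)^`(j.+2) in H.
set U2 := (Rod k)^`(j.+3) in H.
have H0 : ('X^2-1) * U2 + 'X * U1 * 2%:R - U0 * (k%:R * (k%:R + 1)) = 0.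
  move/eqP: H; rewrite -subr_eq0 => /eqP H; rewrite -H.
  rewrite /k !natrM. ring.
rewrite LegE !derivnZ derivn_add derivn_add.
have e2 : (Rod k)^`(2 + k) = U2 by [].
have e1 : (Rod k)^`(1 + k) = U1 by [].
have e0 : (Rod k)^`(k) = U0 by [].
rewrite e2 e1 e0.
rewrite -[_ *: U2]mul_polyC -[_ *: U1]mul_polyC -[_ *: U0]mul_polyC.
rewrite -[LHS](_ : - (cL k)%:P * (('X^2-1) * U2 + 'X * U1 * 2%:R - U0 * (k%:R * (k%:R + 1))) = _).
  by rewrite H0 mulr0.
ring.
Qed.

Lemma f1_0 k : (Legendre R k.+1)^`(1) = 'X * (Legendre R k)^`(1) + Legendre R k * (k.+1)%:R.
Proof.
rewrite !LegE !derivnZ !derivn_add derivnS -derivnSr Rod_der.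
rewrite -derivnS derivnMnr leib1 mulr_natr -scaler_nat scalerA.
have -> : cL k.+1 * (2 * k.+1)%:R = cL k.
  rewrite /cL factS natrM exprS natrM. field; nz.
rewrite add1n -!mul_polyC; ring.
Qed.

Lemma derivNat n : (n%:R : {poly R})^`() = 0.
Proof. by rewrite -polyC_natr derivC. Qed.

Notation P k := (Legendre R k).

Lemma ODEl k l : (1 - 'X^2) * (P k)^`(l.+2) - 'X * (P k)^`(l.+1) * (2 * l.+1)%:R
   + (P k)^`(l) * ((k%:R - l%:R) * (k%:R + l%:R + 1)) = 0.
Proof.
elim: l => [|l IH].
  rewrite -[RHS](ode0 k) derivn0; congr (_ - _ + _); by rewrite ?subr0 ?addr0.
have := congr1 deriv IH; rewrite deriv0 => <-.
rewrite !(derivD, derivB, derivN, derivMNn, derivMn, derivM, derivX, derivXn, derivNat, derivC) -!derivnS.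
rewrite /= expr1 !natrM; ring.
Qed.

Lemma F1l k l : (P k.+1)^`(l.+1) = 'X * (P k)^`(l.+1) + (P k)^`(l) * (k.+1 + l)%:R.
Proof.
elim: l => [|l IH]; first by rewrite f1_0 derivn0 addn0.
rewrite derivnS IH !(derivD, derivM, derivX, derivNat) -!derivnS.
rewrite addnS; ring.
Qed.

Lemma X2m1_monic : ('X^2 - 1 : {poly R}) \is monic.
Proof. by rewrite -polyC1 monicXnsubC. Qed.

Lemma size_Rod k : size (Rod k) = (2 * k).+1.
Proof.
have hs := size_exp ('X^2 - 1 : {poly R}) k.
rewrite -polyC1 size_XnsubC // -/(Rod k) in hs.
have hnz : Rod k != 0 by rewrite monic_neq0 // /Rod monic_exp // X2m1_monic.
by rewrite -hs prednK // size_poly_gt0.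
Qed.

Lemma lead_Rod k : lead_coef (Rod k) = 1.
Proof. by apply/eqP; rewrite -monicE /Rod monic_exp // X2m1_monic. Qed.

Lemma Rod_top k : (Rod k)^`(2 * k) = ((2 * k)`!)%:R.
Proof.
apply/polyP => i; rewrite coef_derivn -polyC_natr coefC.
case: i => [|i].
  have e : (Rod k)`_(2*k) = lead_coef (Rod k) by rewrite /lead_coef size_Rod.
  by rewrite addn0 /= e lead_Rod ffactnn.
by rewrite /= nth_default ?mul0rn // size_Rod addnS ltnS leq_addr.
Qed.

Definition D0c l : R := cL l * ((2 * l)`!)%:R.

Lemma Leg_top l : (P l)^`(l) = (D0c l)%:P.
Proof.
by rewrite LegE derivnZ derivn_add addnn -mul2n Rod_top -polyC_natr -mul_polyC -polyCM.
Qed.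

Lemma Leg_top1 l : (P l)^`(l.+1) = 0.
Proof. by rewrite derivnS Leg_top derivC. Qed.

Lemma hornerNat n (t : R) : (n%:R : {poly R}).[t] = n%:R.
Proof. by rewrite -polyC_natr hornerC. Qed.

Definition Dl l j := (P (l + j))^`(l).
Definition dd l j t := (Dl l j).[t].
Definition dd1 l j t := ((Dl l j)^`()).[t].
Definition dd2 l j t := ((Dl l j)^`()^`()).[t].

Lemma Dl_der1 l j : (Dl l j)^`() = (P (l + j))^`(l.+1).
Proof. by rewrite /Dl derivnS. Qed.
Lemma Dl_der2 l j : (Dl l j)^`()^`() = (P (l + j))^`(l.+2).
Proof. by rewrite Dl_der1 derivnS. Qed.

Lemma ODEj l j t : (1 - t^+2) * dd2 l j t - 2 * (l.+1)%:R * t * dd1 l j t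
   + (j%:R * (j%:R + 2 * l%:R + 1)) * dd l j t = 0.
Proof.
have := congr1 (horner^~ t) (ODEl (l + j) l).
rewrite /dd /dd1 /dd2 Dl_der1 Dl_der2 /Dl !hornerE => <-.
rewrite !hornerNat !natrM /=; ring.
Qed.

Lemma F1j l j t : dd1 l j.+1 t = t * dd1 l j t + (j%:R + 2 * l%:R + 1) * dd l j t.
Proof.
rewrite /dd1 /dd Dl_der1 /Dl (addnS l j) F1l !hornerE hornerNat.
rewrite -derivnS !natrD; ring.
Qed.

Lemma F1j' l j t : dd2 l j.+1 t = t * dd2 l j t + (j%:R + 2 * l%:R + 2%:R) * dd1 l j t.
Proof.
have h := congr1 (horner^~ t) (F1l (l + j) l.+1).
rewrite !hornerE hornerNat in h.
rewrite /dd2 /dd1 Dl_der2 Dl_der1 (addnS l j) h -derivnS !natrD; ring.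
Qed.

Lemma F2j l j t : (j.+1)%:R * dd l j.+1 t = (j%:R + 2 * l%:R + 1) * t * dd l j t - (1 - t^+2) * dd1 l j t.
Proof.
have o1 := ODEj l j.+1 t; have o0 := ODEj l j t.
rewrite F1j' F1j in o1.
have nz : (j%:R + 2 * l%:R + 2%:R) != 0 :> R.
  by rewrite (_ : _ + _ + 2%:R = (j + 2 * l).+2%:R) ?pnatr_eq0 //; ring.
apply: (mulfI nz).
have z0 := congr2 (fun a b => a - t * b) o1 o0; rewrite /= mulr0 subr0 in z0.
by apply: (eq_by0 z0); ring.
Qed.

Lemma dd0 l t : dd l 0 t = D0c l.
Proof. by rewrite /dd /Dl addn0 Leg_top hornerC. Qed.
Lemma dd10 l t : dd1 l 0 t = 0.
Proof. by rewrite /dd1 Dl_der1 addn0 Leg_top1 horner0. Qed.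
Lemma dd11 l t : dd1 l 1 t = (2 * l%:R + 1) * D0c l.
Proof. by rewrite F1j dd10 dd0; ring. Qed.
Lemma dd01 l t : dd l 1 t = (2 * l%:R + 1) * t * D0c l.
Proof. by have := F2j l 0 t; rewrite dd10 dd0 mul1r => ->; ring. Qed.
End Leg.
Arguments dd {R}. Arguments dd1 {R}. Arguments dd2 {R}. Arguments Dl {R}. Arguments D0c {R}. Arguments cL {R}.

Section Conv.
Variables (T : comNzRingType) (a b p q : T) (u v : nat -> T).
Hypothesis hu : forall i, (i.+1)%:R * u i.+1 = (4 * i%:R + p) * u i.
Hypothesis hv : forall i, (i.+1)%:R * v i.+1 = (4 * i%:R + q) * v i.
Definition Sc k := \sum_(h < k.+1) u (k - h) * v h * a ^+ (k - h) * b ^+ h.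
Definition Uc k := \sum_(h < k.+1) (k - h)%:R * (u (k - h) * v h * a ^+ (k - h) * b ^+ h).
Definition Vc k := \sum_(h < k.+1) h%:R * (u (k - h) * v h * a ^+ (k - h) * b ^+ h).

Lemma UVc k : Uc k + Vc k = k%:R * Sc k.
Proof.
rewrite /Uc /Vc -big_split mulr_sumr; apply: eq_bigr => h _ /=.
by rewrite -mulrDl -natrD subnK // -ltnS.
Qed.

Lemma Ucs k : Uc k.+1 = a * (4 * Uc k + p * Sc k).
Proof.
rewrite /Uc big_ord_recr /= subnn mul0r addr0.
rewrite /Sc !mulr_sumr -big_split mulr_sumr; apply: eq_bigr => h _ /=.
have hk : (h <= k)%N by rewrite -ltnS.
rewrite subSn //; set m := (k - h)%N.
apply: (@eq_by0 _ _ _ ((m.+1%:R * u m.+1 - (4 * m%:R + p) * u m) * (v h * a ^+ m.+1 * b ^+ h))).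
  by rewrite hu subrr mul0r.
rewrite exprS; ring.
Qed.

Lemma Vcs k : Vc k.+1 = b * (4 * Vc k + q * Sc k).
Proof.
rewrite /Vc big_ord_recl /= mul0r add0r.
rewrite /Sc !mulr_sumr -big_split mulr_sumr; apply: eq_bigr => h _ /=.
rewrite /bump /= add1n subSS; set m := (k - h)%N.
apply: (@eq_by0 _ _ _ ((h.+1%:R * v h.+1 - (4 * h%:R + q) * v h) * (u m * a ^+ m * b ^+ h.+1))).
  by rewrite hv subrr mul0r.
rewrite exprS; ring.
Qed.

Lemma Sc_rec k : (k.+2)%:R * Sc k.+2 =
   (4 * (k.+1)%:R * (a + b) + p * a + q * b) * Sc k.+1 - 4 * a * b * (4 * k%:R + p + q) * Sc k.
Proof.
rewrite -UVc Ucs Vcs.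
have e1 := UVc k.+1; have e0 := UVc k.
rewrite (_ : _ * Sc k.+1 - _ = 4 * (a + b) * ((k.+1)%:R * Sc k.+1) + (p * a + q * b) * Sc k.+1
   - 4 * a * b * (4 * (k%:R * Sc k) + (p + q) * Sc k)); last by ring.
rewrite -e1 -e0 Ucs Vcs; ring.
Qed.

Lemma Sc1 : Sc 1 = (p * a + q * b) * Sc 0.
Proof.
have := UVc 1; rewrite Ucs Vcs /Uc /Vc !big_ord1 /= !mul0r !mulr0 !add0r mul1r => <-.
ring.
Qed.
End Conv.
Section Cx.
Variable R : realType.
Local Open Scope complex_scope.
Lemma mulCE (a b c d : R) : (a +i* b) * (c +i* d) = (a*c - b*d) +i* (a*d + b*c).
Proof. by []. Qed.
Lemma addCE (a b c d : R) : (a +i* b) + (c +i* d) = (a+c) +i* (b+d).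
Proof. by []. Qed.
Lemma oppCE (a b : R) : - (a +i* b) = (- a) +i* (- b).
Proof. by []. Qed.
Lemma natCE n : (n%:R : R[i]) = (n%:R) +i* 0.
Proof. by rewrite -(rmorph_nat (real_complex R)). Qed.
Lemma realCE (x : R) : x%:C = x +i* 0.
Proof. by []. Qed.
Lemma CE (z : R[i]) : z = (complex.Re z) +i* (complex.Im z).
Proof. by case: z. Qed.
End Cx.
Arguments CE {R}.
Section Gdef.
Variable R : realType.
Definition alpha l j : R := ((2 * l + 2 * j + 1)`!)%:R / ((j`!)%:R * ((l + j)`!)%:R).
Definition beta l h : R := ((2 * l + 2 * h)`!)%:R / ((h`!)%:R * ((l + h)`!)%:R).
Definition pR l : R := (4 * l + 6)%:R.
Definition qR l : R := (4 * l + 2)%:R.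

Lemma fact_neq0R n : (n`!)%:R != 0 :> R.
Proof. by rewrite pnatr_eq0 -lt0n fact_gt0. Qed.

Ltac nzs := repeat (apply/andP; split); try (by rewrite fact_neq0); try (by rewrite expf_neq0 // pnatr_eq0); try (apply: lt0r_neq0; lra).

Lemma alpha_rec l k : (k.+1)%:R * alpha l k.+1 = (4 * k%:R + pR l) * alpha l k.
Proof.
rewrite /alpha /pR (_ : (2 * l + 2 * k.+1 + 1 = (2 * l+2 * k+1).+2)%N); last by lia.
rewrite (addnS l k) !factS !natrM.
have l0 := ler0n R l; have k0 := ler0n R k.
field; nzs.
Qed.

Lemma beta_rec l k : (k.+1)%:R * beta l k.+1 = (4 * k%:R + qR l) * beta l k.
Proof.
rewrite /beta /qR (_ : (2 * l + 2 * k.+1 = (2 * l + 2 * k).+2)%N); last by lia.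
rewrite (addnS l k) !factS !natrM.
have l0 := ler0n R l; have k0 := ler0n R k.
field; nzs.
Qed.

Section G.
Variables (l : nat) (t s : R).
Hypothesis hts : t ^+ 2 + s ^+ 2 = 1.
Local Open Scope complex_scope.
Definition wC : R[i] := t +i* s.
Definition wbC : R[i] := t +i* (- s).
Definition uC k : R[i] := (alpha l k)%:C.
Definition vC k : R[i] := (beta l k)%:C.
Definition Gc m := @Sc _ wC wbC uC vC m.
Definition ReG m := complex.Re (Gc m).
Definition ImG m := complex.Im (Gc m).

Lemma huC k : (k.+1)%:R * uC k.+1 = (4 * k%:R + (pR l)%:C) * uC k.
Proof.
rewrite /uC -!(rmorph_nat (real_complex R)) !realCE !(mulCE, addCE) !(mul0r, mulr0, subr0, addr0, add0r).
by rewrite alpha_rec.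
Qed.
Lemma hvC k : (k.+1)%:R * vC k.+1 = (4 * k%:R + (qR l)%:C) * vC k.
Proof.
rewrite /vC -!(rmorph_nat (real_complex R)) !realCE !(mulCE, addCE) !(mul0r, mulr0, subr0, addr0, add0r).
by rewrite beta_rec.
Qed.

Lemma wwb : wC * wbC = 1.
Proof.
rewrite /wC /wbC mulCE (_ : (1 : R[i]) = 1 +i* 0) //; congr (_ +i* _); last by ring.
by rewrite -hts; ring.
Qed.

Lemma Grec_re k : (k.+2)%:R * ReG k.+2 = (8 * (k.+1)%:R * t + (pR l + qR l) * t) * ReG k.+1
   - (pR l - qR l) * s * ImG k.+1 - 4 * (4 * k%:R + pR l + qR l) * ReG k.
Proof.
have h := @Sc_rec _ wC wbC _ _ uC vC huC hvC k; rewrite -/(Gc _) -/(Gc _) -/(Gc _) in h.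
rewrite -(mulrA 4 wC wbC) wwb mulr1 in h.
rewrite (CE (Gc k.+2)) (CE (Gc k.+1)) (CE (Gc k)) /wC /wbC !natCE !realCE in h.
rewrite !(mulCE, addCE, oppCE) in h.
case: h => h _; move/eqP: h; rewrite -subr_eq0 => /eqP h.
rewrite /ReG /ImG; apply: (eq_by0 h); rewrite /pR /qR; ring.
Qed.

Lemma Grec_im k : (k.+2)%:R * ImG k.+2 = (8 * (k.+1)%:R * t + (pR l + qR l) * t) * ImG k.+1
   + (pR l - qR l) * s * ReG k.+1 - 4 * (4 * k%:R + pR l + qR l) * ImG k.
Proof.
have h := @Sc_rec _ wC wbC _ _ uC vC huC hvC k; rewrite -/(Gc _) -/(Gc _) -/(Gc _) in h.
rewrite -(mulrA 4 wC wbC) wwb mulr1 in h.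
rewrite (CE (Gc k.+2)) (CE (Gc k.+1)) (CE (Gc k)) /wC /wbC !natCE !realCE in h.
rewrite !(mulCE, addCE, oppCE) in h.
case: h => _ h; move/eqP: h; rewrite -subr_eq0 => /eqP h.
rewrite /ReG /ImG; apply: (eq_by0 h); rewrite /pR /qR; ring.
Qed.

Lemma G1_re : ReG 1 = (pR l + qR l) * t * ReG 0 - (pR l - qR l) * s * ImG 0.
Proof.
have h := @Sc1 _ wC wbC _ _ uC vC huC hvC; rewrite -/(Gc _) -/(Gc _) in h.
rewrite (CE (Gc 1)) (CE (Gc 0)) /wC /wbC !realCE in h.
rewrite !(mulCE, addCE, oppCE) in h.
case: h => h _; move/eqP: h; rewrite -subr_eq0 => /eqP h.
rewrite /ReG /ImG; apply: (eq_by0 h); ring.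
Qed.

Lemma G1_im : ImG 1 = (pR l + qR l) * t * ImG 0 + (pR l - qR l) * s * ReG 0.
Proof.
have h := @Sc1 _ wC wbC _ _ uC vC huC hvC; rewrite -/(Gc _) -/(Gc _) in h.
rewrite (CE (Gc 1)) (CE (Gc 0)) /wC /wbC !realCE in h.
rewrite !(mulCE, addCE, oppCE) in h.
case: h => _ h; move/eqP: h; rewrite -subr_eq0 => /eqP h.
rewrite /ReG /ImG; apply: (eq_by0 h); ring.
Qed.

Lemma G0E : Gc 0 = (alpha l 0 * beta l 0)%:C.
Proof.
rewrite /Gc /Sc big_ord1 /= !expr0 !mulr1 /uC /vC.
by rewrite !realCE mulCE !(mulr0, mul0r, subr0, addr0).
Qed.

Definition lam m : R := 2 ^+ l * 4 ^+ m * ((2 * l)`!)%:R / (l`!)%:R.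
Definition claim m := ReG m = lam m * ((1 - t ^+ 2) * dd1 l m.+1 t + (m.+1)%:R * t * dd l m.+1 t)
  /\ ImG m = s * (lam m * (t * dd1 l m.+1 t - (m.+1)%:R * dd l m.+1 t)).

Lemma ddS j : dd l j.+1 t = ((j%:R + 2 * l%:R + 1) * t * dd l j t - (1 - t ^+ 2) * dd1 l j t) / (j.+1)%:R.
Proof. by rewrite -F2j mulrC mulKf // pnatr_eq0. Qed.

Lemma sq_s (c Y : R) : c * s * (s * Y) = c * (1 - t ^+ 2) * Y.
Proof. by rewrite -hts; ring. Qed.

Lemma claim0 : claim 0.
Proof.
rewrite /claim /ReG /ImG G0E /= dd01 dd11 /lam /D0c /cL /alpha /beta.
rewrite !muln0 !addn0 fact0 addn1 factS natrM.
have l0 := ler0n R l.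
split; [field; nzs | ring].
Qed.

Lemma claim1 : claim 1.
Proof.
have [c0 c1] := claim0.
rewrite /claim G1_re G1_im c0 c1 (ddS 1) (F1j _ l 1) dd01 dd11 sq_s /lam /pR /qR.
have l0 := ler0n R l.
split; field; nzs.
Qed.

Lemma claim_step k : claim k -> claim k.+1 -> claim k.+2.
Proof.
move=> [c0 c0'] [c1 c1'].
have l0 := ler0n R l; have k0 := ler0n R k.
have nz : (k.+2)%:R != 0 :> R by rewrite pnatr_eq0.
split; apply: (mulfI nz).
- rewrite Grec_re c0 c1 c1' sq_s.
  rewrite (ddS k.+2) (F1j _ l k.+2) (ddS k.+1) (F1j _ l k.+1) /lam /pR /qR !exprS.
  field; nzs.
- rewrite Grec_im c0' c1 c1'.
  rewrite (ddS k.+2) (F1j _ l k.+2) (ddS k.+1) (F1j _ l k.+1) /lam /pR /qR !exprS.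
  field; nzs.
Qed.

Lemma claim_all m : claim m.
Proof.
suff : claim m /\ claim m.+1 by case.
elim: m => [|m [IH1 IH2]]; first by split; [exact: claim0 | exact: claim1].
by split => //; apply: claim_step.
Qed.
End G.
End Gdef.
Section Quat.
Local Open Scope complex_scope.
Variable R : realType.
Variable phi : R.
Definition psi (z : R[i]) : quat R :=
  Quat (complex.Re z) (complex.Im z * cos phi) (complex.Im z * sin phi) 0.

Lemma psiM z1 z2 : qmul (psi z1) (psi z2) = psi (z1 * z2).
Proof.
case: z1 => a b; case: z2 => c d.
have h := cos2Dsin2 phi.
rewrite /qmul /psi /=; congr Quat.
- apply: (eq_by0 (z := (b * d) * (1 - (cos phi ^+ 2 + sin phi ^+ 2)))); first by rewrite h subrr mulr0.
  ring.
- ring.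
- ring.
- ring.
Qed.

Lemma psiD z1 z2 : qadd (psi z1) (psi z2) = psi (z1 + z2).
Proof. case: z1 => a b; case: z2 => c d; rewrite /qadd /psi /=; congr Quat; ring. Qed.

Lemma psiZ (c : R) z : qscale c (psi z) = psi (c%:C * z).
Proof. case: z => a b; rewrite /qscale /psi /=; congr Quat; ring. Qed.

Lemma psi1 : psi 1 = qone R.
Proof. by rewrite /psi /qone /=; congr Quat; ring. Qed.

Lemma psi0 : psi 0 = qzero R.
Proof. by rewrite /psi /qzero /=; congr Quat; ring. Qed.

Lemma psiX z k : qpow (psi z) k = psi (z ^+ k).
Proof.
elim: k => [|k IH]; first by rewrite expr0 psi1.
by rewrite /qpow iterS -/(qpow _ k) IH psiM exprS.
Qed.

Lemma psi_sum (F : nat -> quat R) (G : nat -> R[i]) N :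
  (forall h, F h = psi (G h)) -> qsum F N = psi (\sum_(h < N) G h).
Proof.
move=> hFG; elim: N => [|N IH]; first by rewrite big_ord0 psi0.
by rewrite /= IH hFG psiD big_ord_recr.
Qed.

Definition Psi (l : nat) (z : R[i]) : quat R :=
  Quat (complex.Re z * cos (l%:R * phi)) (complex.Im z * cos (l.+1%:R * phi))
       (complex.Im z * sin (l.+1%:R * phi)) (- (complex.Re z * sin (l%:R * phi))).

Lemma psi_Psi l z (c : R) : qmul (psi z) (Quat (c * cos (l%:R * phi)) 0 0 (- (c * sin (l%:R * phi))))
   = qscale c (Psi l z).
Proof.
case: z => a b.
have e1 : l.+1%:R * phi = l%:R * phi + phi by rewrite -natr1; ring.
rewrite /qmul /psi /qscale /Psi /= e1 cosD sinD; congr Quat; ring.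
Qed.

Lemma demoivre (rho : R) l : qpow (Quat (rho * cos phi) 0 0 (- (rho * sin phi))) l =
  Quat (rho ^+ l * cos (l%:R * phi)) 0 0 (- (rho ^+ l * sin (l%:R * phi))).
Proof.
elim: l => [|l IH].
  by rewrite /qpow /= /qone mul0r cos0 sin0 expr0; congr Quat; ring.
rewrite /qpow iterS -/(qpow _ l) IH.
have e1 : l.+1%:R * phi = l%:R * phi + phi by rewrite -natr1; ring.
rewrite /qmul /= e1 cosD sinD exprS; congr Quat; ring.
Qed.
End Quat.
Section An.
Variable R : realType.

Lemma sqrt_cos (th : R) : 0 <= th -> th <= pi -> Num.sqrt (1 - cos th ^+ 2) = sin th.
Proof.
move=> h0 h1; rewrite -sin2cos2 sqrtr_sqr ger0_norm //; apply: sin_ge0_pi; by rewrite h0 h1.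
Qed.

Lemma assoc_der k m (t : R) : 0 < 1 - t ^+ 2 ->
  derive1 (assocLegendre k m) t =
  Num.sqrt (1 - t ^+ 2) ^+ m * ((Legendre R k)^`(m))^`().[t]
  + ((Legendre R k)^`(m)).[t] * (m%:R * Num.sqrt (1 - t ^+ 2) ^+ m.-1 *
       ((2 * Num.sqrt (1 - t ^+ 2))^-1 * (- (2 * t)))).
Proof.
move=> ht.
set Q := (Legendre R k)^`(m).
set g := horner (1 - 'X^2 : {poly R}).
have gE : forall y, g y = 1 - y ^+ 2 by move=> y; rewrite /g !hornerE.
have E : assocLegendre k m = ((Num.sqrt \o g) ^+ m) * horner Q.
  apply: funext => y; rewrite /assocLegendre /= -/Q mulrfctE exprfctE /= gE //.
have hg : is_derive t 1 g ((1 - 'X^2 : {poly R})^`().[t]) by apply: is_derive_poly.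
have hs : is_derive (g t) 1 Num.sqrt (2 * Num.sqrt (g t))^-1 by apply: is_derive1_sqrt; rewrite gE.
have hc := is_derive1_comp hs hg.
have hp := is_deriveX m hc.
have hq : is_derive t 1 (horner Q) (Q^`().[t]) by apply: is_derive_poly.
have hM := is_deriveM hp hq.
rewrite E derive1E (@derive_val _ _ _ _ _ _ _ hM) /= exprfctE /= gE.
rewrite /GRing.scale /=.
have -> : (1 - 'X^2 : {poly R})^`().[t] = - (2 * t).
  rewrite derivB derivC derivXn /= expr1 sub0r hornerN hornerMn hornerX; ring.
by [].
Qed.

Lemma calA_eq m n th : 0 <= th -> th <= pi -> calA m n th = 2^-1 * sin th ^+ m *
  ((1 - cos th ^+ 2) * (((Legendre R n.+1)^`(m))^`()).[cos th]
   + ((n.+1)%:R - m%:R) * cos th * ((Legendre R n.+1)^`(m)).[cos th]).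
Proof.
move=> h0 h1.
rewrite /calA {2}/assocLegendre sqrt_cos //.
set Q := (Legendre R n.+1)^`(m).
have [s0|s0] := eqVneq (sin th) 0.
  rewrite -sin2cos2 s0 expr0n /= !mul0r add0r.
  case: m Q => [|j] Q; first by rewrite !expr0 subr0; ring.
  by rewrite expr0n /= !(mulr0, mul0r).
have hp : 0 < 1 - cos th ^+ 2.
  by rewrite -sin2cos2 exprn_even_gt0.
rewrite assoc_der // sqrt_cos // -/Q -sin2cos2.
case: m Q => [|j] Q; first by rewrite !expr0 /=; ring.
rewrite /= !(exprS (sin th) j); set S := sin th ^+ j.
field; exact: s0.
Qed.
End An.

Ltac nzs := repeat (apply/andP; split); try (by rewrite fact_neq0); try (by rewrite expf_neq0 // pnatr_eq0); try (apply: lt0r_neq0; lra).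

Section Final.
Variable R : realType.

Lemma vE0 l m (t : R) : ((Legendre R (l + m).+1)^`(l)).[t] = dd l m.+1 t.
Proof. by rewrite /dd /Dl addnS. Qed.
Lemma vE1 l m (t : R) : (((Legendre R (l + m).+1)^`(l))^`()).[t] = dd1 l m.+1 t.
Proof. by rewrite /dd1 /Dl addnS. Qed.
Lemma vE1' l m (t : R) : ((Legendre R (l + m).+1)^`(l.+1)).[t] = dd1 l m.+1 t.
Proof. by rewrite /dd1 /Dl addnS derivnS. Qed.
Lemma vE2 l m (t : R) : (((Legendre R (l + m).+1)^`(l.+1))^`()).[t] = dd2 l m.+1 t.
Proof. by rewrite /dd2 /Dl addnS derivnS. Qed.

Variables (r th phi : R).
Hypotheses (h0 : 0 <= th) (h1 : th <= pi).

Definition Kc l m : R := ((l+m)`!)%:R * (l`!)%:R / (2 ^+ (2 * m) * ((l + m + l + 1)`!)%:R * ((2 * l)`!)%:R).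

Lemma T1 l m : A_nl (l + m) l r th phi =
  qscale (Kc l m * r ^+ (l + m) * sin th ^+ l) (Psi R phi l (Gc R l (cos th) (sin th) m)).
Proof.
have hts : cos th ^+2 + sin th ^+2 = 1 := cos2Dsin2 th.
have := claim_all R l (cos th) (sin th) hts m; rewrite /claim /ReG /ImG /lam => -[cR cI].
have e2 := ODEj R l m.+1 (cos th).
rewrite /A_nl /Psi /qscale /qadd /= !calA_eq // ?vE0 ?vE1 ?vE1' ?vE2 cR cI.
have e2' : (1 - cos th ^+ 2) * dd2 l m.+1 (cos th) = 2 * l.+1%:R * cos th * dd1 l m.+1 (cos th)
   - m.+1%:R * (m.+1%:R + 2 * l%:R + 1) * dd l m.+1 (cos th) by apply: (eq_by0 e2); ring.
rewrite e2' /Kc (_ : (l + m + l + 2 = (l + m + l + 1).+1)%N); last by lia.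
rewrite factS natrM !(exprS _ l) exprM (_ : (2 : R) ^+ 2 = 4); last by ring.
have l0 := ler0n R l; have m0 := ler0n R m.
congr Quat; field; nzs.
Qed.

Lemma A_ll l : A_nl l l r th phi =
  Quat ((r * sin th) ^+ l * cos (l%:R * phi)) 0 0 (- ((r * sin th) ^+ l * sin (l%:R * phi))).
Proof.
have := T1 l 0; rewrite addn0 => ->.
rewrite G0E /Psi /qscale /= /Kc /alpha /beta !muln0 !addn0 fact0 expr0 exprMn.
rewrite (_ : (l + l = 2 * l)%N); last by lia.
rewrite addn1 factS natrM.
have l0 := ler0n R l.
congr Quat; rewrite ?mul0r ?mulr0 //; field; nzs.
Qed.

Local Open Scope complex_scope.
Lemma Psi_scale l (c : R) z : Psi R phi l (c%:C * z) = qscale c (Psi R phi l z).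
Proof. case: z => a b; rewrite /Psi /qscale /=; congr Quat; ring. Qed.

Lemma qscaleA (a b : R) X : qscale a (qscale b X) = qscale (a * b) X.
Proof. case: X => ? ? ? ?; rewrite /qscale /=; congr Quat; ring. Qed.

Lemma xq_psi : xq (r * cos th) (r * sin th * cos phi) (r * sin th * sin phi)
   = psi R phi (r%:C * wC R (cos th) (sin th)).
Proof. rewrite /xq /psi /wC realCE mulCE /=; congr Quat; ring. Qed.

Lemma xbarq_psi : xbarq (r * cos th) (r * sin th * cos phi) (r * sin th * sin phi)
   = psi R phi (r%:C * wbC R (cos th) (sin th)).
Proof. rewrite /xbarq /psi /wbC realCE mulCE /=; congr Quat; ring. Qed.

Definition cc n l h : R := ((2 * n - 2 * h + 1)`!)%:R * ((2 * l + 2 * h)`!)%:R /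
                   ((h`!)%:R * ((n - l - h)`!)%:R * ((n - h)`!)%:R * ((l + h)`!)%:R).

Lemma sum_term l m (h : 'I_m.+1) :
  (cc (l + m) l h)%:C * ((r%:C * wbC R (cos th) (sin th)) ^+ h * (r%:C * wC R (cos th) (sin th)) ^+ (m - h))
  = (r ^+ m)%:C * (uC R l (m - h) * vC R l h * wC R (cos th) (sin th) ^+ (m - h) * wbC R (cos th) (sin th) ^+ h).
Proof.
have hm : (h <= m)%N by rewrite -ltnS.
have ec : cc (l + m) l h = alpha R l (m - h) * beta R l h.
  rewrite /cc /alpha /beta.
  rewrite (_ : (2 * (l + m) - 2 * h + 1 = 2 * l + 2 * (m - h) + 1)%N); last by lia.
  rewrite (_ : (l + m - l - h = m - h)%N); last by lia.
  rewrite (_ : (l + m - h = l + (m - h))%N); last by lia.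
  field; nzs.
rewrite ec.
have -> : (r ^+ m)%:C = (r%:C) ^+ h * (r%:C) ^+ (m - h) by rewrite rmorphXn -exprD subnKC.
rewrite /uC /vC !exprMn rmorphM; ring.
Qed.

Lemma sum_all l m : \sum_(h < m.+1) (cc (l + m) l h)%:C * ((r%:C * wbC R (cos th) (sin th)) ^+ h * (r%:C * wC R (cos th) (sin th)) ^+ (m - h))
  = (r ^+ m)%:C * Gc R l (cos th) (sin th) m.
Proof. by rewrite /Gc /Sc mulr_sumr; apply: eq_bigr => h _; rewrite sum_term. Qed.
End Final.

Theorem mainTheorem4 (R : realType) (n l : nat) (hl : (l <= n)%N)
  (x0 x1 x2 r theta phi : R)
  (hr : 0 <= r) (htheta0 : 0 <= theta) (hthetapi : theta <= pi)
  (hx0 : x0 = r * cos theta)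
  (hx1 : x1 = r * sin theta * cos phi)
  (hx2 : x2 = r * sin theta * sin phi) :
  A_nl n l r theta phi =
    qscale ((n`!)%:R * (l`!)%:R /
            (2 ^+ (2 * (n - l)) * ((n + l + 1)`!)%:R * (((2 * l)`!)%:R)))
      (qmul
        (qsum (fun h =>
           qscale (((2 * n - 2 * h + 1)`!)%:R * ((2 * l + 2 * h)`!)%:R /
                   ((h`!)%:R * ((n - l - h)`!)%:R * ((n - h)`!)%:R
                    * ((l + h)`!)%:R))
             (qmul (qpow (xbarq x0 x1 x2) h) (qpow (xq x0 x1 x2) (n - l - h))))
          (n - l).+1)
        (A_nl l l r theta phi))
  /\ A_nl l l r theta phi = qpow (Quat x1 0 0 (- x2)) l.
Proof.
Local Open Scope complex_scope.
have [m ->] : exists m, n = (l + m)%N by exists (n - l)%N; rewrite subnKC.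
rewrite hx0 hx1 hx2.
have A := A_ll R r theta phi htheta0 hthetapi l.
split; last by rewrite A demoivre.
rewrite (T1 R r theta phi htheta0 hthetapi) A.
rewrite (@psi_sum R phi _ (fun h => (cc R (l + m) l h)%:C * ((r%:C * wbC R (cos theta) (sin theta)) ^+ h
     * (r%:C * wC R (cos theta) (sin theta)) ^+ (l + m - l - h)))); last first.
  by move=> h; rewrite xq_psi xbarq_psi !psiX psiM psiZ.
rewrite addKn sum_all.
have E := psi_Psi R phi l ((r ^+ m)%:C * Gc R l (cos theta) (sin theta) m) ((r * sin theta) ^+ l).
rewrite E Psi_scale !qscaleA.
congr qscale; rewrite /Kc exprMn exprD; ring.
- exact: htheta0.
- exact: hthetapi.
Qed.
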